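(* Let $m\ge n$ and let $\Gamma$ be a subset of $M_{m\times n}(\mathbb{C})$ such that for any $A,B\in\Gamma$ there exists a function $p:[0,1]\rightarrow M_{m\times n}(\mathbb{C})$ whose entries are analytic functions on $[0,1]$ with $p(0)=A$, $p(1)=B$ and $p([0,1])\subset\Gamma$. Let $\Gamma_d$ be the set of matrices in $\Gamma$ whose singular values are distinct. If $\Gamma$ contains at least one matrix with distinct singular values, then $\Gamma_d$ is dense in $\Gamma$.
   Context: $M_{m\times n}(\mathbb{C})$ denotes the set of $m\times n$ complex matrices with the topology induced by the Frobenius norm; throughout $m\ge n$. The singular values of $A\in M_{m\times n}(\mathbb{C})$ are the $n$ nonnegative square roots of the eigenvalues of $A^{\ast}A$, counted with multiplicity; distinct means pairwise different. A complex-valued function is analytic on $[0,1]$ if it is the restriction of a function defined on an open interval containing $[0,1]$ which around each point is given by a convergent power series. *)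

(* Defs.v *)
From HB Require Import structures.
From mathcomp Require Import all_boot all_order all_algebra.
From mathcomp Require Import reals Rstruct.
From mathcomp Require Import complex.
Set Implicit Arguments. Unset Strict Implicit. Unset Printing Implicit Defensive.
Import Order.TTheory GRing.Theory Num.Theory.
Local Open Scope ring_scope.

Notation RR := Rdefinitions.R.
Notation CC := (complex RR).

Definition cmod (z : CC) : RR := Num.sqrt (complex.Re z ^+ 2 + complex.Im z ^+ 2).

Definition adjmx m n (A : 'M[CC]_(m, n)) : 'M[CC]_(n, m) := (map_mx (@conjc RR) A)^T.

Definition frob m n (A : 'M[CC]_(m, n)) : RR :=
  Num.sqrt (\sum_(i < m) \sum_(j < n) (cmod (A i j)) ^+ 2).

(* s is the list of the n singular values of A, counted with multiplicity:
   the nonnegative square roots of the eigenvalues (with multiplicity) of A^* A *)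
Definition singular_values m n (A : 'M[CC]_(m, n)) (s : seq RR) : Prop :=
  [/\ size s = n, all (fun x => 0 <= x) s &
      char_poly (adjmx A *m A) = \prod_(x <- s) ('X - ((x ^+ 2)%:C)%C%:P)].

Definition distinct_singular_values m n (A : 'M[CC]_(m, n)) : Prop :=
  exists s, singular_values A s /\ uniq s.

Definition series_converges_to (u : nat -> CC) (l : CC) : Prop :=
  forall eps : RR, 0 < eps -> exists N0 : nat, forall N : nat, (N0 <= N)%N ->
    cmod (\sum_(k < N) u k - l) < eps.

Definition analytic_on01 (f : RR -> CC) : Prop :=
  exists (g : RR -> CC) (a b : RR),
    [/\ a < 0, 1 < b,
        (forall t : RR, 0 <= t <= 1 -> g t = f t) &
        forall x0 : RR, a < x0 < b ->
          exists r : RR, 0 < r /\ exists c : nat -> CC,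
            forall x : RR, a < x < b -> `|x - x0| < r ->
              series_converges_to (fun k => c k * ((x - x0)%:C)%C ^+ k) (g x)].

Definition analytic_path_connected m n (Gamma : 'M[CC]_(m, n) -> Prop) : Prop :=
  forall A B, Gamma A -> Gamma B ->
    exists p : RR -> 'M[CC]_(m, n),
      [/\ p 0 = A, p 1 = B,
          (forall t : RR, 0 <= t <= 1 -> Gamma (p t)) &
          forall i j, analytic_on01 (fun t => p t i j)].

(* Main.v *)
From Coquelicot Require Import Coquelicot.
From Stdlib Require Import Reals Lra Lia FunctionalExtensionality.
Require Import Defs.
From HB Require Import structures.
From mathcomp Require Import all_boot all_order all_algebra all_field.
From mathcomp Require Import reals Rstruct complex.
Import Order.TTheory GRing.Theory Num.Theory.


Section Ana.
Local Open Scope R_scope.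

Definition RA (u : R -> R) (a b : R) : Prop :=
  forall x0, a < x0 < b -> exists r, 0 < r /\ exists c : nat -> R,
    forall h, Rabs h < r -> is_pseries c h (u (x0 + h)).

Lemma finite_bound (u : nat -> R) (N : nat) :
  exists M, forall n, (n < N)%coq_nat -> Rabs (u n) <= M.
Proof.
induction N as [|N [M HM]].
- exists 0; intros n Hn; lia.
- exists (Rmax M (Rabs (u N))); intros n Hn.
  destruct (Nat.eq_dec n N) as [->|Hne].
  + apply Rmax_r.
  + eapply Rle_trans; [apply HM; lia| apply Rmax_l].
Qed.

Lemma le_radius (c : nat -> R) (x : R) :
  ex_pseries c x -> Rbar_le (Rabs x) (CV_radius c).
Proof.
intros Hex.
destruct (CV_radius_bounded c) as [Hub _]. apply Hub.
assert (Hl : is_lim_seq (fun k => scal (pow_n x k) (c k)) 0).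
{ apply ex_series_lim_0. exact Hex. }
apply is_lim_seq_spec in Hl.
destruct (Hl (mkposreal 1 Rlt_0_1)) as [N HN].
destruct (finite_bound (fun k => scal (pow_n x k) (c k)) N) as [M HM].
exists (Rmax M 1). intros n.
assert (E : Rabs (c n * Rabs x ^ n) = Rabs (scal (pow_n x n) (c n))).
{ rewrite pow_n_pow. unfold scal; simpl. unfold mult; simpl.
  rewrite !Rabs_mult RPow_abs Rabs_Rabsolu. ring. }
rewrite E.
destruct (Nat.lt_ge_cases n N) as [H|H].
- eapply Rle_trans; [apply HM; exact H| apply Rmax_l].
- eapply Rle_trans; [|apply Rmax_r].
  specialize (HN n H). simpl in HN. rewrite Rminus_0_r in HN. lra.
Qed.

Lemma radius_of (c : nat -> R) (r : R) :
  (forall h, Rabs h < r -> ex_pseries c h) ->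
  forall h, Rabs h < r -> Rbar_lt (Rabs h) (CV_radius c).
Proof.
intros Hc h Hh.
set (h' := (Rabs h + r) / 2).
assert (H1 : Rabs h' < r).
{ unfold h'. rewrite Rabs_pos_eq. lra. pose proof (Rabs_pos h). lra. }
pose proof (le_radius c h' (Hc h' H1)) as Hle.
eapply Rbar_lt_le_trans; [|exact Hle].
simpl. unfold h'. rewrite (Rabs_pos_eq ((Rabs h + r) / 2)). lra. pose proof (Rabs_pos h). lra.
Qed.


Lemma RA_mono u a b a' b' : a <= a' -> b' <= b -> RA u a b -> RA u a' b'.
Proof. intros H1 H2 H x0 Hx. apply H. lra. Qed.

Lemma RA_plus u v a b : RA u a b -> RA v a b -> RA (fun t => u t + v t) a b.
Proof.
intros Hu Hv x0 Hx.
destruct (Hu x0 Hx) as [r1 [Hr1 [c1 H1]]].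
destruct (Hv x0 Hx) as [r2 [Hr2 [c2 H2]]].
exists (Rmin r1 r2). split. apply Rmin_pos; assumption.
exists (PS_plus c1 c2). intros h Hh.
apply (is_pseries_plus c1 c2 h (u (x0+h)) (v (x0+h))).
apply H1. eapply Rlt_le_trans; [exact Hh| apply Rmin_l].
apply H2. eapply Rlt_le_trans; [exact Hh| apply Rmin_r].
Qed.

Lemma RA_opp u a b : RA u a b -> RA (fun t => - u t) a b.
Proof.
intros Hu x0 Hx.
destruct (Hu x0 Hx) as [r1 [Hr1 [c1 H1]]].
exists r1. split. exact Hr1. exists (PS_opp c1). intros h Hh.
apply (is_pseries_opp c1 h (u (x0+h))). apply H1. exact Hh.
Qed.

Lemma RA_mult u v a b : RA u a b -> RA v a b -> RA (fun t => u t * v t) a b.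
Proof.
intros Hu Hv x0 Hx.
destruct (Hu x0 Hx) as [r1 [Hr1 [c1 H1]]].
destruct (Hv x0 Hx) as [r2 [Hr2 [c2 H2]]].
exists (Rmin r1 r2). split. apply Rmin_pos; assumption.
exists (PS_mult c1 c2). intros h Hh.
assert (Hh1 : Rabs h < r1) by (eapply Rlt_le_trans; [exact Hh| apply Rmin_l]).
assert (Hh2 : Rabs h < r2) by (eapply Rlt_le_trans; [exact Hh| apply Rmin_r]).
apply is_pseries_mult.
apply H1; exact Hh1. apply H2; exact Hh2.
apply (radius_of c1 r1); [|exact Hh1]. intros y Hy. eexists. apply H1. exact Hy.
apply (radius_of c2 r2); [|exact Hh2]. intros y Hy. eexists. apply H2. exact Hy.
Qed.

Definition cst_ps (k : R) (n : nat) : R := match n with O => k | S _ => 0 end.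

Lemma is_pseries_cst k h : is_pseries (cst_ps k) h k.
Proof.
unfold is_pseries. apply is_series_Reals. intros eps Heps. exists O. intros n _.
assert (E : sum_f_R0 (fun k0 : nat => scal (pow_n h k0) (cst_ps k k0)) n = k).
{ induction n as [|n IH].
  - simpl. unfold scal; simpl. unfold mult; simpl. apply Rmult_1_l.
  - simpl. rewrite IH. unfold scal; simpl. unfold mult; simpl. rewrite Rmult_0_r; apply Rplus_0_r. }
rewrite E. unfold Rdist. rewrite Rminus_diag Rabs_R0. exact Heps.
Qed.

Lemma RA_const k a b : RA (fun _ => k) a b.
Proof.
intros x0 Hx. exists 1. split. lra. exists (cst_ps k). intros h _. apply is_pseries_cst.
Qed.

Lemma RA_cont u a b x0 : RA u a b -> a < x0 < b ->
  forall eps, 0 < eps -> exists d, 0 < d /\ forall h, Rabs h < d -> Rabs (u (x0 + h) - u x0) < eps.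
Proof.
intros Hu Hx eps Heps.
destruct (Hu x0 Hx) as [r [Hr [c H]]].
assert (Hrad : Rbar_lt (Rabs 0) (CV_radius c)).
{ apply (radius_of c r). intros y Hy. eexists. apply H. exact Hy. rewrite Rabs_R0. exact Hr. }
pose proof (PSeries_continuity c 0 Hrad) as Hc.
destruct (Hc eps Heps) as [d [Hd Hd2]].
exists (Rmin d r). split. apply Rmin_pos; assumption.
intros h Hh.
assert (Hh1 : Rabs h < d) by (eapply Rlt_le_trans; [exact Hh| apply Rmin_l]).
assert (Hh2 : Rabs h < r) by (eapply Rlt_le_trans; [exact Hh| apply Rmin_r]).
assert (E1 : u (x0 + h) = PSeries c h) by (symmetry; apply is_pseries_unique; apply H; exact Hh2).
assert (E2 : u x0 = PSeries c 0).
{ symmetry. rewrite <- (Rplus_0_r x0). apply is_pseries_unique; apply H. rewrite Rabs_R0. exact Hr. }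
rewrite E1 E2.
destruct (Req_dec h 0) as [->|Hne]. rewrite Rminus_diag Rabs_R0. exact Heps.
apply (Hd2 h). split. split. exact I. auto.
unfold R_dist, Rdist; simpl. unfold Rdist. rewrite Rminus_0_r. exact Hh1.
Qed.

Lemma coef_zero (c : nat -> R) (r e : R) :
  0 < e -> 0 < r ->
  (forall h, Rabs h < r -> ex_pseries c h) ->
  (forall h, - e < h < 0 -> PSeries c h = 0) -> forall k, c k = 0.
Proof.
intros He Hr Hc Hz.

intro k. induction k as [k IH] using (well_founded_induction Wf_nat.lt_wf).
set (d := PS_decr_n c k).
assert (Hd : forall h, Rabs h < r -> ex_pseries d h).
{ intros h Hh. apply ex_pseries_decr_n; [|apply Hc; exact Hh].
  destruct (Req_dec h 0) as [->|Hne]. left; reflexivity.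
  right. exists (/ h). change (/ h * h = 1). apply Rinv_l. exact Hne. }
assert (Hrad : Rbar_lt (Rabs 0) (CV_radius d)).
{ apply (radius_of d r). exact Hd. rewrite Rabs_R0. exact Hr. }
pose proof (PSeries_continuity d 0 Hrad) as Hcont.
assert (Hz' : forall h, - e < h < 0 -> PSeries d h = 0).
{ intros h Hh. pose proof (PSeries_decr_n_aux c k h) as E.
  rewrite Hz in E; [|exact Hh].
  assert (E' : 0 = h ^ k * PSeries d h). apply E. intros j Hj. apply IH. exact Hj.
  symmetry in E'. apply Rmult_integral in E'. destruct E' as [E'|E']; [|exact E'].
  exfalso. apply (pow_nonzero h k). lra. exact E'. }
assert (Hd0 : PSeries d 0 = c k).
{ rewrite PSeries_0. unfold d, PS_decr_n. f_equal. lia. }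
destruct (Req_dec (c k) 0) as [E|Hne]; [exact E|exfalso].
destruct (Hcont (Rabs (c k)) (Rabs_pos_lt _ Hne)) as [al [Hal Hal2]].
set (h := - Rmin al e / 2).
assert (Hmin : 0 < Rmin al e) by (apply Rmin_pos; assumption).
assert (Hh : - e < h < 0).
{ unfold h. pose proof (Rmin_r al e). lra. }
specialize (Hal2 h). 
assert (Hlt : Rabs (PSeries d h - PSeries d 0) < Rabs (c k)).
{ apply Hal2. split. split. exact I. lra.
  change (Rabs (h - 0) < al). rewrite Rminus_0_r. unfold h. rewrite Rabs_left.
  pose proof (Rmin_l al e). lra. lra. }
rewrite Hz' in Hlt; [|exact Hh]. rewrite Hd0 in Hlt.
rewrite Rminus_0_l Rabs_Ropp in Hlt. lra.
Qed.


Lemma RA_id u a b : a < 0 -> 1 < b -> RA u a b -> u 1 <> 0 ->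
  forall d, 0 < d -> exists t, 0 < t < d /\ t <= 1 /\ u t <> 0.
Proof.
intros Ha Hb Hu H1 d Hd.
apply Classical_Prop.NNPP. intro Hno.
assert (Hz : forall t, 0 < t < d -> t <= 1 -> u t = 0).
{ intros t Ht Ht1. apply Classical_Prop.NNPP. intro Hne. apply Hno. exists t. tauto. }
set (d' := Rmin d 1).
assert (Hd' : 0 < d') by (apply Rmin_pos; lra).
set (E := fun s => 0 <= s <= 1 /\ forall t, 0 < t < s -> u t = 0).
assert (Ed' : E d').
{ split. split. lra. apply Rmin_r. intros t Ht. apply Hz.
  pose proof (Rmin_l d 1). fold d' in H. lra.
  pose proof (Rmin_r d 1). fold d' in H. lra. }
assert (Hbd : bound E). { exists 1. intros s Hs. apply Hs. }
destruct (completeness E Hbd (ex_intro _ d' Ed')) as [S [HS1 HS2]].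
assert (HSd : d' <= S) by (apply HS1; exact Ed').
assert (HS1' : S <= 1). { apply HS2. intros s Hs. apply Hs. }
assert (HS : forall t, 0 < t < S -> u t = 0).
{ intros t Ht. apply Classical_Prop.NNPP. intro Hne.
  assert (Hub : is_upper_bound E t).
  { intros s Hs. destruct (Rle_dec s t) as [Hle|Hgt]; [exact Hle|].
    exfalso. apply Hne. apply Hs. lra. }
  pose proof (HS2 t Hub). lra. }
destruct (Hu S) as [r [Hr [c Hc]]]. lra.
assert (Hex : forall h, Rabs h < r -> ex_pseries c h).
{ intros h Hh. eexists. apply Hc. exact Hh. }
assert (Hc0 : forall k, c k = 0).
{ apply (coef_zero c r (Rmin S r)). apply Rmin_pos; lra. exact Hr. exact Hex.
  intros h Hh. pose proof (Rmin_l S r). pose proof (Rmin_r S r).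
  rewrite (is_pseries_unique c h (u (S + h))). apply HS. lra.
  apply Hc. rewrite Rabs_left; lra. }
assert (Hu0 : forall h, Rabs h < r -> u (S + h) = 0).
{ intros h Hh. rewrite <- (is_pseries_unique c h (u (S + h))); [|apply Hc; exact Hh].
  rewrite (PSeries_ext c (fun _ => 0)). apply PSeries_const_0. exact Hc0. }
destruct (Req_dec S 1) as [ES|NS].
- apply H1. rewrite <- ES. rewrite <- (Rplus_0_r S). apply Hu0. rewrite Rabs_R0. exact Hr.
- set (s' := Rmin (S + r / 2) 1).
  assert (HSs : S < s').
  { unfold s'. unfold Rmin. destruct (Rle_dec (S + r/2) 1); lra. }
  assert (Es' : E s').
  { pose proof (Rmin_l (S + r/2) 1). pose proof (Rmin_r (S + r/2) 1). fold s' in H, H0.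
    split. split. lra. exact H0.
    intros t Ht. destruct (Rlt_dec t S) as [Hlt|Hge].
    apply HS. lra. replace t with (S + (t - S)) by ring. apply Hu0.
    rewrite Rabs_pos_eq; lra. }
  pose proof (HS1 s' Es'). lra.
Qed.

End Ana.

Set Implicit Arguments. Unset Strict Implicit. Unset Printing Implicit Defensive.
Local Open Scope ring_scope.

Lemma Re_abs_le (z : CC) : `|complex.Re z| <= cmod z.
Proof.
case: z => x y /=. rewrite /cmod /=.
rewrite -sqrtr_sqr. apply: ler_wsqrtr. rewrite lerDl. exact: sqr_ge0.
Qed.

Lemma Im_abs_le (z : CC) : `|complex.Im z| <= cmod z.
Proof.
case: z => x y /=. rewrite /cmod /=.
rewrite -sqrtr_sqr. apply: ler_wsqrtr. rewrite lerDr. exact: sqr_ge0.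
Qed.

Lemma Re_mulr (z : CC) (r : RR) : complex.Re (z * (r%:C)%C) = complex.Re z * r.
Proof. case: z => x y /=. by rewrite mulr0 subr0. Qed.

Lemma Im_mulr (z : CC) (r : RR) : complex.Im (z * (r%:C)%C) = complex.Im z * r.
Proof. case: z => x y /=. by rewrite mulr0 add0r. Qed.

Lemma conv_part (P : CC -> RR) (HP : forall z w, P (z + w) = P z + P w)
  (HP0 : P 0 = 0) (HPB : forall z w, P (z - w) = P z - P w)
  (HPm : forall z r, P (z * (r%:C)%C) = P z * r)
  (HPle : forall z, `|P z| <= cmod z)
  (c : nat -> CC) (h : RR) (l : CC) :
  series_converges_to (fun k => c k * (h%:C)%C ^+ k) l ->
  is_pseries (fun k => P (c k)) h (P l).
Proof.
move=> Hs. rewrite /is_pseries. apply/is_series_Reals => eps /RltP Heps.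
have [N0 HN] := Hs eps Heps.
exists N0 => n /ssrnat.leP Hn.
rewrite sum_f_R0E /Rdist RabsE big_mkord.
have E : \sum_(i < n.+1) scal (pow_n h i) (P (c i)) = P (\sum_(i < n.+1) c i * (h%:C)%C ^+ i).
{ elim: n.+1 => [|k IH]. by rewrite !big_ord0 HP0.
  rewrite !big_ord_recr /= IH HP. congr (_ + _).
  rewrite -rmorphXn HPm pow_n_pow RpowE. rewrite /scal /= /mult /=. by rewrite mulrC. }
rewrite E RminusE -HPB. apply/RltP. apply: le_lt_trans (HPle _) _. apply: HN.
apply: leq_trans Hn _. exact: leqnSn.
Qed.

Definition Sfun (f : RR -> CC) : Prop := exists a b : RR,
  [/\ Rlt a 0, Rlt 1 b, RA (fun t => complex.Re (f t)) a b & RA (fun t => complex.Im (f t)) a b].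

Lemma RA_of (P : CC -> RR) (HP : forall z w, P (z + w) = P z + P w)
  (HP0 : P 0 = 0) (HPB : forall z w, P (z - w) = P z - P w)
  (HPm : forall z r, P (z * (r%:C)%C) = P z * r)
  (HPle : forall z, `|P z| <= cmod z) (g : RR -> CC) (a b : RR) :
  (forall x0 : RR, a < x0 < b ->
          exists r : RR, 0 < r /\ exists c : nat -> CC,
            forall x : RR, a < x < b -> `|x - x0| < r ->
              series_converges_to (fun k => c k * ((x - x0)%:C)%C ^+ k) (g x)) ->
  RA (fun t => P (g t)) a b.
Proof.
move=> H x0 [/RltP Hax /RltP Hxb].
have [r [Hr [c Hc]]] := H x0 (introT andP (conj Hax Hxb)).
exists (Rmin r (Rmin (x0 - a) (b - x0))). split.
  apply: Rmin_pos; first exact/RltP. apply: Rmin_pos; apply/RltP; rewrite subr_gt0 //.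
exists (fun k => P (c k)) => h Hh.
have Hh1 : Rlt (Rabs h) r by apply: Rlt_le_trans Hh (Rmin_l _ _).
have Hh2 : Rlt (Rabs h) (x0 - a) by apply: Rlt_le_trans Hh (Rle_trans _ _ _ (Rmin_r _ _) (Rmin_l _ _)).
have Hh3 : Rlt (Rabs h) (b - x0) by apply: Rlt_le_trans Hh (Rle_trans _ _ _ (Rmin_r _ _) (Rmin_r _ _)).
apply: conv_part => //.
have E : x0 + h - x0 = h by rewrite addrC addKr.
have [Hl1 Hl2] := Rabs_def2 _ _ Hh2.
have [Hm1 Hm2] := Rabs_def2 _ _ Hh3.
have Hx : a < x0 + h < b.
{ apply/andP; split; apply/RltP; rewrite -?RminusE -?RoppE -?RplusE in Hl1 Hl2 Hm1 Hm2 *; lra. }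
have Hd : `|x0 + h - x0| < r by rewrite E -RabsE; apply/RltP.
have := Hc _ Hx Hd. by rewrite E.
Qed.

Lemma analytic_S (f : RR -> CC) : analytic_on01 f ->
  exists g, Sfun g /\ forall t : RR, 0 <= t <= 1 -> g t = f t.
Proof.
move=> [g [a [b [Ha Hb Hgf Hser]]]].
exists g; split=> //. exists a, b. split; try exact/RltP.
- apply: RA_of Hser.
  + by case=> ? ? [] ? ?.
  + by [].
  + by case=> ? ? [] ? ?.
  + exact: Re_mulr.
  + exact: Re_abs_le.
- apply: RA_of Hser.
  + by case=> ? ? [] ? ?.
  + by [].
  + by case=> ? ? [] ? ?.
  + exact: Im_mulr.
  + exact: Im_abs_le.
Qed.

Lemma RA_ext u v a b : (forall t, u t = v t) -> RA u a b -> RA v a b.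
Proof.
move=> E H x0 Hx. have [r [Hr [c Hc]]] := H x0 Hx.
exists r; split=> //; exists c => h Hh. rewrite -E. exact: Hc.
Qed.

Lemma Sfun2 f g : Sfun f -> Sfun g -> exists a b : RR,
  [/\ Rlt a 0, Rlt 1 b, (RA (fun t => complex.Re (f t)) a b /\ RA (fun t => complex.Im (f t)) a b)
  & (RA (fun t => complex.Re (g t)) a b /\ RA (fun t => complex.Im (g t)) a b)].
Proof.
move=> [a1 [b1 [Ha1 Hb1 H1 H2]]] [a2 [b2 [Ha2 Hb2 H3 H4]]].
exists (Rmax a1 a2), (Rmin b1 b2). split.
- by apply: Rmax_lub_lt.
- by apply: Rmin_glb_lt.
- split; (apply: RA_mono; last eassumption); [apply: Rmax_l|apply: Rmin_l|apply: Rmax_l|apply: Rmin_l].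
- split; (apply: RA_mono; last eassumption); [apply: Rmax_r|apply: Rmin_r|apply: Rmax_r|apply: Rmin_r].
Qed.

Lemma Sfun_add f g : Sfun f -> Sfun g -> Sfun (fun t => f t + g t).
Proof.
move=> Hf Hg; have [a [b [Ha Hb [F1 F2] [G1 G2]]]] := Sfun2 Hf Hg.
exists a, b; split=> //.
- apply: RA_ext (RA_plus _ _ _ _ F1 G1) => t. by case: (f t) => ? ?; case: (g t).
- apply: RA_ext (RA_plus _ _ _ _ F2 G2) => t. by case: (f t) => ? ?; case: (g t).
Qed.

Lemma Sfun_mul f g : Sfun f -> Sfun g -> Sfun (fun t => f t * g t).
Proof.
move=> Hf Hg; have [a [b [Ha Hb [F1 F2] [G1 G2]]]] := Sfun2 Hf Hg.
exists a, b; split=> //.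
- apply: RA_ext (RA_plus _ _ _ _ (RA_mult _ _ _ _ F1 G1) (RA_opp _ _ _ (RA_mult _ _ _ _ F2 G2))) => t.
  by case: (f t) => ? ?; case: (g t).
- apply: RA_ext (RA_plus _ _ _ _ (RA_mult _ _ _ _ F1 G2) (RA_mult _ _ _ _ F2 G1)) => t.
  by case: (f t) => ? ?; case: (g t).
Qed.

Lemma Sfun_opp f : Sfun f -> Sfun (fun t => - f t).
Proof.
move=> [a [b [Ha Hb F1 F2]]]. exists a, b; split=> //.
- apply: RA_ext (RA_opp _ _ _ F1) => t. by case: (f t).
- apply: RA_ext (RA_opp _ _ _ F2) => t. by case: (f t).
Qed.

Lemma Sfun_conj f : Sfun f -> Sfun (fun t => conjc (f t)).
Proof.
move=> [a [b [Ha Hb F1 F2]]]. exists a, b; split=> //.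
- apply: RA_ext F1 => t. by case: (f t).
- apply: RA_ext (RA_opp _ _ _ F2) => t. by case: (f t).
Qed.

Lemma Sfun_const k : Sfun (fun _ => k).
Proof.
exists (-1), 2. split.
- by apply/RltP; rewrite oppr_lt0.
- by apply/RltP; rewrite ltr1n.
- exact: RA_const.
- exact: RA_const.
Qed.

Set Implicit Arguments. Unset Strict Implicit. Unset Printing Implicit Defensive.
Local Open Scope ring_scope.

Section Closure.
Variables (R : comNzRingType) (Q : (RR -> R) -> Prop).
Hypothesis QC : forall k, Q (fun _ => k).
Hypothesis QD : forall f g, Q f -> Q g -> Q (fun t => f t + g t).
Hypothesis QM : forall f g, Q f -> Q g -> Q (fun t => f t * g t).

Lemma Q_ext f g : (forall t, f t = g t) -> Q f -> Q g.
Proof. by move=> E; rewrite (functional_extensionality _ _ E). Qed.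

Lemma Q_sum (I : Type) (r : seq I) (P : pred I) (F : I -> RR -> R) :
  (forall i, Q (F i)) -> Q (fun t => \sum_(i <- r | P i) F i t).
Proof.
move=> HF; elim: r => [|i r IH].
  by apply: Q_ext (QC 0) => t; rewrite big_nil.
case: (boolP (P i)) => Pi.
  by apply: Q_ext (QD (HF i) IH) => t; rewrite big_cons Pi.
by apply: Q_ext IH => t; rewrite big_cons (negbTE Pi).
Qed.

Lemma Q_prod (I : Type) (r : seq I) (P : pred I) (F : I -> RR -> R) :
  (forall i, Q (F i)) -> Q (fun t => \prod_(i <- r | P i) F i t).
Proof.
move=> HF; elim: r => [|i r IH].
  by apply: Q_ext (QC 1) => t; rewrite big_nil.
case: (boolP (P i)) => Pi.
  by apply: Q_ext (QM (HF i) IH) => t; rewrite big_cons Pi.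
by apply: Q_ext IH => t; rewrite big_cons (negbTE Pi).
Qed.

Lemma Q_det n (A : RR -> 'M[R]_n) :
  (forall i j, Q (fun t => A t i j)) -> Q (fun t => \det (A t)).
Proof.
move=> HA. rewrite /determinant.
apply: Q_sum => s. apply: QM; first exact: QC.
apply: Q_prod => i. exact: HA.
Qed.

End Closure.

Definition Sa (f : RR -> CC) := exists g, Sfun g /\ forall t : RR, 0 <= t <= 1 -> g t = f t.

Lemma Sa_const k : Sa (fun _ => k).
Proof. exists (fun _ => k); split=> //; exact: Sfun_const. Qed.

Lemma Sa_add f g : Sa f -> Sa g -> Sa (fun t => f t + g t).
Proof.
move=> [f1 [H1 E1]] [g1 [H2 E2]]; exists (fun t => f1 t + g1 t); split.
  exact: Sfun_add. by move=> t Ht; rewrite E1 ?E2.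
Qed.

Lemma Sa_mul f g : Sa f -> Sa g -> Sa (fun t => f t * g t).
Proof.
move=> [f1 [H1 E1]] [g1 [H2 E2]]; exists (fun t => f1 t * g1 t); split.
  exact: Sfun_mul. by move=> t Ht; rewrite E1 ?E2.
Qed.

Lemma Sa_opp f : Sa f -> Sa (fun t => - f t).
Proof.
move=> [f1 [H1 E1]]; exists (fun t => - f1 t); split.
  exact: Sfun_opp. by move=> t Ht; rewrite E1.
Qed.

Lemma Sa_conj f : Sa f -> Sa (fun t => conjc (f t)).
Proof.
move=> [f1 [H1 E1]]; exists (fun t => conjc (f1 t)); split.
  exact: Sfun_conj. by move=> t Ht; rewrite E1.
Qed.

Lemma Sa_ext f g : (forall t, f t = g t) -> Sa f -> Sa g.
Proof. exact: Q_ext. Qed.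

Lemma Sa_sum (I : Type) (r : seq I) (P : pred I) (F : I -> RR -> CC) :
  (forall i, Sa (F i)) -> Sa (fun t => \sum_(i <- r | P i) F i t).
Proof. apply: Q_sum; [exact: Sa_const|exact: Sa_add]. Qed.

Lemma Sa_det n (A : RR -> 'M[CC]_n) :
  (forall i j, Sa (fun t => A t i j)) -> Sa (fun t => \det (A t)).
Proof. apply: Q_det; [exact: Sa_const|exact: Sa_add|exact: Sa_mul]. Qed.

Lemma Sa_muln f m : Sa f -> Sa (fun t => f t *+ m).
Proof.
move=> H; apply: Sa_ext (Sa_mul H (Sa_const m%:R)) => t. by rewrite mulr_natr.
Qed.

Definition PSa (P : RR -> {poly CC}) := forall k, Sa (fun t => (P t)`_k).

Lemma PSa_const k : PSa (fun _ => k).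
Proof. move=> i; exact: Sa_const. Qed.

Lemma PSa_add f g : PSa f -> PSa g -> PSa (fun t => f t + g t).
Proof. move=> H1 H2 k; apply: Sa_ext (Sa_add (H1 k) (H2 k)) => t; by rewrite coefD. Qed.

Lemma PSa_mul f g : PSa f -> PSa g -> PSa (fun t => f t * g t).
Proof.
move=> H1 H2 k.
have := @Sa_sum 'I_k.+1 (index_enum _) xpredT (fun j (t : RR) => (f t)`_j * (g t)`_(k - j)).
move=> /(_ (fun j => Sa_mul (H1 _) (H2 _))) H.
by apply: Sa_ext H => t; rewrite coefM.
Qed.

Lemma PSa_opp f : PSa f -> PSa (fun t => - f t).
Proof. move=> H1 k; apply: Sa_ext (Sa_opp (H1 k)) => t; by rewrite coefN. Qed.

Lemma PSa_polyC f : Sa f -> PSa (fun t => (f t)%:P).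
Proof.
move=> H k; case: (eqVneq k 0%N) => [->|nk].
  by apply: Sa_ext H => t; rewrite coefC.
by apply: Sa_ext (Sa_const 0) => t; rewrite coefC (negbTE nk).
Qed.

Lemma PSa_det n (A : RR -> 'M[{poly CC}]_n) :
  (forall i j, PSa (fun t => A t i j)) -> PSa (fun t => \det (A t)).
Proof. apply: Q_det; [exact: PSa_const|exact: PSa_add|exact: PSa_mul]. Qed.

Lemma PSa_char_poly n (M : RR -> 'M[CC]_n) :
  (forall i j, Sa (fun t => M t i j)) -> PSa (fun t => char_poly (M t)).
Proof.
move=> HM. apply: PSa_det => i j.
apply: Q_ext (PSa_add (PSa_const ('X *+ (i == j))) (PSa_opp (PSa_polyC (HM i j)))) => t.
by rewrite !mxE.
Qed.

Definition Syl (R : nzRingType) (d1 d2 : nat) (p q : {poly R}) : 'M[R]_(d1 + d2) :=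
  col_mx (lin1_mx (poly_rV \o p \o* rVpoly) : 'M_(d1, d1 + d2))
         (lin1_mx (poly_rV \o q \o* rVpoly) : 'M_(d2, d1 + d2)).

Lemma resultant_Syl (R : nzRingType) (p q : {poly R}) d1 d2 :
  size q = d1.+1 -> size p = d2.+1 -> resultant p q = \det (Syl d1 d2 p q).
Proof.
move=> Hq Hp. rewrite /resultant.
change (Sylvester_mx p q) with (Syl (size q).-1 (size p).-1 p q).
by rewrite Hq Hp.
Qed.

Lemma SylE (R : nzRingType) d1 d2 (p q : {poly R}) (i j : 'I_(d1 + d2)) :
  Syl d1 d2 p q i j = match fintype.split i with inl k => p`_(j - k) *+ (k <= j) | inr k => q`_(j - k) *+ (k <= j) end.
Proof.
rewrite /Syl mxE; case: {i}(fintype.split i) => i /[!mxE]/=;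
  by rewrite rVpoly_delta coefXnM ltnNge if_neg -mulrb.
Qed.

Lemma Sa_Syl d1 d2 (P Q : RR -> {poly CC}) : PSa P -> PSa Q ->
  Sa (fun t => \det (Syl d1 d2 (P t) (Q t))).
Proof.
move=> HP HQ; apply: Sa_det => i j.
apply: Sa_ext (_ : Sa (fun t => match fintype.split i with inl k => (P t)`_(j - k) *+ (k <= j) | inr k => (Q t)`_(j - k) *+ (k <= j) end)) => [t|].
  by rewrite SylE.
case: (fintype.split i) => k; exact: Sa_muln.
Qed.

Lemma PSa_deriv P : PSa P -> PSa (fun t => (P t)^`()).
Proof. move=> H k; apply: Sa_ext (Sa_muln k.+1 (H k.+1)) => t; by rewrite coef_deriv. Qed.

Set Implicit Arguments. Unset Strict Implicit. Unset Printing Implicit Defensive.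
Local Open Scope ring_scope.

Lemma adjmx_mul m n p (X : 'M[CC]_(m, n)) (Y : 'M[CC]_(n, p)) :
  adjmx (X *m Y) = adjmx Y *m adjmx X.
Proof. by rewrite /adjmx map_mxM trmx_mul. Qed.

Lemma adjmxK m n (X : 'M[CC]_(m, n)) : adjmx (adjmx X) = X.
Proof. by apply/matrixP => i j; rewrite !mxE conjcK. Qed.

Lemma mulJ_norm (x : CC) : x * conjc x = `|x| ^+ 2.
Proof. by rewrite normcE sqr_sqrtc. Qed.

Lemma gram_ge0 n (x : 'rV[CC]_n) : 0 <= (x *m adjmx x) 0 0.
Proof.
rewrite mxE; apply: sumr_ge0 => k _. rewrite !mxE mulJ_norm. exact: exprn_ge0.
Qed.

Lemma gram_gt0 n (x : 'rV[CC]_n) : x != 0 -> 0 < (x *m adjmx x) 0 0.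
Proof.
move=> nx. rewrite lt_def gram_ge0 andbT. apply/negP => /eqP H.
move: nx; apply/negP; rewrite negbK; apply/eqP/rowP => k.
move: H; rewrite mxE => /eqP; rewrite psumr_eq0 => [|i _]; last first.
  by rewrite !mxE mulJ_norm exprn_ge0.
move=> /allP /(_ k (mem_index_enum _)) /implyP /(_ isT).
by rewrite !mxE mulJ_norm sqrf_eq0 normr_eq0 => /eqP ->.
Qed.

Lemma eig_ge0 m n (A : 'M[CC]_(m, n)) z :
  root (char_poly (adjmx A *m A)) z -> 0 <= z.
Proof.
rewrite -eigenvalue_root_char => /eigenvalueP [v Hv nv].
set w := v *m adjmx A.
have E : (w *m adjmx w) 0 0 = z * (v *m adjmx v) 0 0.
{ rewrite /w adjmx_mul adjmxK !mulmxA -(mulmxA v) Hv.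
  by rewrite -scalemxAl mxE. }
have Hv0 := gram_gt0 nv.
have -> : z = (w *m adjmx w) 0 0 / (v *m adjmx v) 0 0.
  by rewrite E mulfK // gt_eqF.
by rewrite divr_ge0 // ?gram_ge0 // ltW.
Qed.

Lemma sv_sep m n (A : 'M[CC]_(m, n)) :
  distinct_singular_values A -> separable_poly (char_poly (adjmx A *m A)).
Proof.
move=> [s [[Hs Hpos Hcp] Hu]].
rewrite Hcp -(big_map (fun x : RR => ((x ^+ 2)%:C)%C) xpredT (fun z => 'X - z%:P)).
rewrite separable_prod_XsubC map_inj_in_uniq // => x y Hx Hy /complexI /eqP.
move: Hpos => /allP Hpos.
by rewrite eqrXn2 // ?Hpos // => /eqP.
Qed.

Lemma Re_ge0 (z : CC) : 0 <= z -> 0 <= complex.Re z.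
Proof. by rewrite lecE => /andP [_]. Qed.

Lemma ReK (z : CC) : 0 <= z -> ((complex.Re z)%:C)%C = z.
Proof. by move=> H; apply: RRe_real; apply: ger0_real. Qed.

Lemma sep_sv m n (A : 'M[CC]_(m, n)) :
  separable_poly (char_poly (adjmx A *m A)) -> distinct_singular_values A.
Proof.
set P := char_poly _ => Hsep.
have [r Hr] := closed_field_poly_normal P.
have Hmon : lead_coef P = 1 by apply/monicP; exact: char_poly_monic.
rewrite Hmon scale1r in Hr.
have Hge : forall z, z \in r -> 0 <= z.
{ move=> z Hz. apply: (eig_ge0 (A := A)). rewrite -/P Hr root_prod_XsubC. exact: Hz. }
exists (map (fun z => Num.sqrt (complex.Re z)) r). split; [split|].
- rewrite size_map. have := size_char_poly (adjmx A *m A). rewrite -/P Hr size_prod_XsubC.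
  by case.
- by apply/allP => x /mapP [z _ ->]; exact: sqrtr_ge0.
- rewrite -/P {1}Hr big_map. apply: eq_big_seq => z Hz.
  by rewrite sqr_sqrtr ?Re_ge0 ?Hge // ReK ?Hge.
- rewrite map_inj_in_uniq; first by rewrite Hr separable_prod_XsubC in Hsep.
  move=> x y Hx Hy /(congr1 (fun u => u ^+ 2)).
  rewrite !sqr_sqrtr ?Re_ge0 ?Hge // => E.
  by rewrite -(ReK (Hge _ Hx)) -(ReK (Hge _ Hy)) E.
Qed.

Lemma sep_res (P : {poly CC}) : P != 0 -> separable_poly P = (resultant P P^`() != 0).
Proof.
move=> nP. rewrite unlock resultant_eq0 /coprimep.
have : gcdp P P^`() != 0 by rewrite gcdp_eq0 negb_and nP.
rewrite -size_poly_gt0.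
by case: (size _) => [|[|k]].
Qed.

Lemma size_deriv_monic (P : {poly CC}) n : P \is monic -> size P = n.+2 -> size P^`() = n.+1.
Proof.
move=> /monicP Hm Hs.
have nP : P != 0 by rewrite -size_poly_gt0 Hs.
have H1 := lt_size_deriv nP. rewrite Hs ltnS in H1.
have Hc : P^`()`_n != 0.
{ rewrite coef_deriv. move: Hm; rewrite lead_coefE Hs /= => ->.
  by rewrite pnatr_eq0. }
apply/eqP; rewrite eqn_leq H1 /=. rewrite ltnNge. apply/negP => /leq_sizeP H.
by move: Hc; rewrite H ?eqxx.
Qed.

Set Implicit Arguments. Unset Strict Implicit. Unset Printing Implicit Defensive.
Local Open Scope ring_scope.

Lemma num_ineqR (N eps : R) : Rle 0 N -> Rlt 0 eps ->
  Rlt (Rmult N (pow (Rdiv eps (Rplus N (IZR 1))) 2)) (pow eps 2).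
Proof.
move=> HN He.
set e' := Rdiv eps (Rplus N (IZR 1)).
have He' : Rlt 0 e' by rewrite /e'; apply: Rdiv_lt_0_compat; lra.
have E : eps = Rmult e' (Rplus N (IZR 1)) by rewrite /e'; field; lra.
rewrite E. nra.
Qed.

Lemma num_ineq (N eps : RR) : 0 <= N -> 0 < eps -> Num.sqrt (N * (eps / (N + 1)) ^+ 2) < eps.
Proof.
move=> HN He.
rewrite -{2}(ger0_norm (ltW He)) -sqrtr_sqr ltr_sqrt; last by rewrite exprn_gt0.
move/RleP: HN => HN; move/RltP: He => He.
apply/RltP. have := num_ineqR HN He. by rewrite !RpowE RdivE RmultE RplusE R1E.
Qed.

Lemma cmod_ge0 (z : CC) : 0 <= cmod z.
Proof. exact: sqrtr_ge0. Qed.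

Lemma frob_le m n (X : 'M[CC]_(m, n)) (eta : RR) : 0 <= eta ->
  (forall i j, cmod (X i j) <= eta) -> frob X <= Num.sqrt ((m * n)%:R * eta ^+ 2).
Proof.
move=> He H. rewrite /frob. apply: ler_wsqrtr.
apply: le_trans (_ : \sum_(i < m) \sum_(j < n) eta ^+ 2 <= _).
  apply: ler_sum => i _; apply: ler_sum => j _.
  by rewrite ler_pXn2r // ?nnegrE ?cmod_ge0.
rewrite !sumr_const !card_ord -mulrnA mulr_natl.
by rewrite mulnC.
Qed.

Lemma cmod_le (z : CC) : cmod z <= `|complex.Re z| + `|complex.Im z|.
Proof.
rewrite /cmod -(ger0_norm (addr_ge0 (normr_ge0 (complex.Re z)) (normr_ge0 (complex.Im z)))).
rewrite -sqrtr_sqr. apply: ler_wsqrtr.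
rewrite sqrrD !real_normK ?num_real //.
rewrite [X in _ <= X]addrAC lerDl.
by rewrite mulrn_wge0 // mulr_ge0.
Qed.

Lemma fin_unif (T : finType) (P : T -> RR -> Prop) :
  (forall x d d', 0 < d' -> d' <= d -> P x d -> P x d') ->
  (forall x, exists d, 0 < d /\ P x d) -> exists d, 0 < d /\ forall x, P x d.
Proof.
move=> Hmono Hex.
suff [d [Hd Hs]] : exists d, 0 < d /\ forall x, x \in enum T -> P x d.
  by exists d; split=> // x; apply: Hs; rewrite mem_enum.
elim: (enum T) => [|x s [d [Hd Hs]]].
  by exists 1; split=> // x; rewrite in_nil.
have [d' [Hd' Hx]] := Hex x.
exists (Num.min d d'); split; first by rewrite lt_min Hd Hd'.
move=> y; rewrite in_cons => /orP [/eqP ->|Hy].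
  by apply: Hmono Hx; rewrite ?lt_min ?Hd ?Hd' // ge_min lexx orbT.
by apply: Hmono (Hs y Hy); rewrite ?lt_min ?Hd ?Hd' // ge_min lexx.
Qed.

Lemma Sfun_id g : Sfun g -> g 1 != 0 -> forall d : RR, 0 < d ->
  exists t : RR, [/\ 0 < t, t < d, t <= 1 & g t != 0].
Proof.
move=> [a [b [Ha Hb H1 H2]]] Hg1 d /RltP Hd.
have [HR|HI] : complex.Re (g 1) <> 0 \/ complex.Im (g 1) <> 0.
{ move: Hg1; case: (g 1) => x y /= Hne.
  case: (eqVneq x 0) => [Ex|Nx]; last by left; apply/eqP.
  case: (eqVneq y 0) => [Ey|Ny]; last by right; apply/eqP.
  by move: Hne; rewrite Ex Ey eqxx. }
- have [t [[Ht1 Ht2] [Ht3 Ht4]]] := RA_id _ _ _ Ha Hb H1 HR d Hd.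
  exists t; split; try (apply/RltP; assumption); try (apply/RleP; assumption).
  by apply/eqP => E; apply: Ht4; rewrite E.
- have [t [[Ht1 Ht2] [Ht3 Ht4]]] := RA_id _ _ _ Ha Hb H2 HI d Hd.
  exists t; split; try (apply/RltP; assumption); try (apply/RleP; assumption).
  by apply/eqP => E; apply: Ht4; rewrite E.
Qed.

Lemma Sa_cont0 f : Sa f -> forall eta : RR, 0 < eta ->
  exists d : RR, 0 < d /\ forall t : RR, 0 <= t -> t < d -> t <= 1 -> cmod (f 0 - f t) < eta.
Proof.
move=> [g [[a [b [Ha Hb H1 H2]]] E]] eta Heta.
have Hx : Rlt a 0 /\ Rlt 0 b by split=> //; apply: Rlt_trans Rlt_0_1 Hb.
have He2 : 0 < eta / 2 by rewrite divr_gt0. move/RltP in He2.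
have [d1 [Hd1 C1]] := RA_cont _ _ _ _ H1 Hx _ He2.
have [d2 [Hd2 C2]] := RA_cont _ _ _ _ H2 Hx _ He2.
exists (Num.min d1 d2); split.
  by rewrite lt_min; apply/andP; split; apply/RltP.
move=> t Ht0 Htd Ht1.
have Ht : Rlt (Rabs t) (Num.min d1 d2) by rewrite RabsE ger0_norm //; apply/RltP.
have Ht1' : Rlt (Rabs t) d1 by apply: Rlt_le_trans Ht _; apply/RleP; rewrite ge_min lexx.
have Ht2' : Rlt (Rabs t) d2 by apply: Rlt_le_trans Ht _; apply/RleP; rewrite ge_min lexx orbT.
move: (C1 _ Ht1') (C2 _ Ht2'); rewrite Rplus_0_l => /RltP G1 /RltP G2.
rewrite -E ?lexx ?ler01 // -E ?Ht0 ?Ht1 //.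
apply: le_lt_trans (cmod_le _) _.
rewrite (splitr eta). apply: ltrD.
- move: G1; rewrite RabsE RminusE distrC. by case: (g 0) => ? ?; case: (g t) => ? ?.
- move: G2; rewrite RabsE RminusE distrC. by case: (g 0) => ? ?; case: (g t) => ? ?.
Qed.

Lemma main_pos m n (Gamma : 'M[CC]_(m, n.+1) -> Prop) :
  analytic_path_connected Gamma ->
  (exists A0, Gamma A0 /\ distinct_singular_values A0) ->
  forall A, Gamma A -> forall eps : RR, 0 < eps ->
    exists B, [/\ Gamma B, distinct_singular_values B & frob (A - B) < eps].
Proof.
move=> Hpc [A0 [HA0 HdA0]] A HA eps Heps.
have [p [p0 p1 HG Han]] := Hpc A A0 HA HA0.
have Hent : forall i j, Sa (fun t => p t i j).
{ move=> i j; have [g [Hg E]] := analytic_S (Han i j). by exists g. }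
pose M := fun t => adjmx (p t) *m p t.
have HM : forall i j, Sa (fun t => M t i j).
{ move=> i j.
  have := @Sa_sum 'I_m (index_enum _) xpredT (fun l t => conjc (p t l i) * p t l j).
  move=> /(_ (fun l => Sa_mul (Sa_conj (Hent l i)) (Hent l j))) H.
  apply: Sa_ext H => t. rewrite /M !mxE; apply: eq_bigr => l _; by rewrite !mxE. }
pose P := fun t => char_poly (M t).
have HP : PSa P := PSa_char_poly HM.
have HQ : PSa (fun t => (P t)^`()) := PSa_deriv HP.
have HD := Sa_Syl n n.+1 HP HQ.
have Hsz : forall t, size (P t) = n.+2 by move=> t; exact: size_char_poly.
have HszQ : forall t, size (P t)^`() = n.+1.
  by move=> t; apply: size_deriv_monic (Hsz t); exact: char_poly_monic.
have Hsep : forall t, separable_poly (P t) = (\det (Syl n n.+1 (P t) (P t)^`()) != 0).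
  by move=> t; rewrite -(resultant_Syl (HszQ t) (Hsz t)) sep_res // -size_poly_gt0 Hsz.
have HD1 : \det (Syl n n.+1 (P 1) (P 1)^`()) != 0.
  by rewrite -Hsep /P /M p1; apply: sv_sep.
have [g [Hg Eg]] := HD.
have Hg1 : g 1 != 0 by rewrite Eg // lexx ler01.
pose eta := eps / ((m * n.+1)%:R + 1).
have Heta : 0 < eta by rewrite divr_gt0 // ltr_wpDl // ler0n.
have [d [Hd Hcont]] := @fin_unif (prod 'I_m 'I_n.+1)
  (fun ij d => forall t : RR, 0 <= t -> t < d -> t <= 1 -> cmod (p 0 ij.1 ij.2 - p t ij.1 ij.2) < eta)
  (fun ij d d' _ Hdd H t Ht0 Htd Ht1 => H t Ht0 (lt_le_trans Htd Hdd) Ht1)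
  (fun ij => Sa_cont0 (Hent ij.1 ij.2) Heta).
have [t [Ht0 Htd Ht1 Hgt]] := Sfun_id Hg Hg1 Hd.
exists (p t). split.
- apply: HG. by rewrite ltW.
- apply: sep_sv. have := Hsep t. rewrite /P /M => ->. by rewrite -Eg // ltW.
- rewrite -p0. apply: le_lt_trans (frob_le (ltW Heta) _) _.
    move=> i j; rewrite !mxE; apply: ltW. exact: (Hcont (i, j) t (ltW Ht0) Htd Ht1).
  by apply: num_ineq.
Qed.

Unset Implicit Arguments.
Theorem theorem4p7 (m n : nat) (Hmn : (n <= m)%N)
    (Gamma : 'M[CC]_(m, n) -> Prop) :
  analytic_path_connected Gamma ->
  (exists A0, Gamma A0 /\ distinct_singular_values A0) ->
  forall A, Gamma A -> forall eps : RR, 0 < eps ->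
    exists B, [/\ Gamma B, distinct_singular_values B & frob (A - B) < eps].
Proof.
case: n Hmn Gamma => [|n] Hmn Gamma; last exact: main_pos.
move=> _ _ A HA eps Heps. exists A; split=> //.
- exists [::]; split=> //; split=> //.
  by rewrite big_nil /char_poly det_mx00.
- rewrite /frob big1 ?sqrtr0 // => i _. by rewrite big_ord0.
Qed.
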